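(* Let $\alpha$ be a countable ordinal and let $(x_n)_n$ be a bounded sequence in $X_\alpha$. Suppose there are $\varepsilon>0$, an ordinal $\beta<\alpha$ and a block sequence $(s_n)_n$ of elements of $\mathcal S_\beta$ (i.e. $\max s_n<\min s_{n+1}$) such that $\sum_{k\in s_n}|(x_n)_k|\ge\varepsilon$ for every $n$. Then $\{x_n\}_n$ is not a Banach-Saks set.
   Context: A subset $A$ of a Banach space is a Banach-Saks set if every sequence in $A$ has a subsequence whose Ces\`aro means converge in norm. For a family $\mathcal F$ of finite subsets of $\mathbb N$, $X_{\mathcal F}$ is the completion of $c_{00}(\mathbb N)$ under $\|x\|_{\mathcal F}=\max\{\|x\|_\infty,\sup_{s\in\mathcal F}\sum_{n\in s}|(x)_n|\}$, $(x)_k$ denoting the $k$-th coordinate. The Schreier family is $\mathcal S=\{s\subseteq\mathbb N: \#s\le\min s\}$; $\mathcal F\otimes\mathcal G=\{s_0\cup\dots\cup s_n: s_0<\dots<s_n \text{ in }\mathcal F,\ \{\min s_i\}_{i\le n}\in\mathcal G\}$ with $s<t$ meaning $\max s<\min t$. For each countable limit ordinal $\alpha$ a strictly increasing sequence $(\beta_n^{(\alpha)})_n$ with supremum $\alpha$ is fixed; $\mathcal S_0=\{s:\#s\le1\}$, $\mathcal S_{\alpha+1}=\mathcal S_\alpha\otimes\mathcal S$, and for limit $\alpha$, $\mathcal S_\alpha=\bigcup_n\{s\in\mathcal S_{\beta_n^{(\alpha)}}: s\subseteq[n+1,\infty)\}$. $X_\alpha:=X_{\mathcal S_\alpha}$.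 *)

(* Defs.v *)
From mathcomp Require Import all_boot all_order all_algebra.
From mathcomp Require Import reals.
Set Implicit Arguments. Unset Strict Implicit. Unset Printing Implicit Defensive.
Import Order.TTheory GRing.Theory Num.Theory.

(* Countable ordinals as Brouwer trees; a limit node carries its       *)
(* fundamental sequence (beta_n)_n.                                     *)
Inductive ord : Type :=
| O0 : ord
| OS : ord -> ord
| OL : (nat -> ord) -> ord.

Inductive ole : ord -> ord -> Prop :=
| ole_zero y : ole O0 y
| ole_succ x y : olt x y -> ole (OS x) y
| ole_lim f y : (forall n, ole (f n) y) -> ole (OL f) y
with olt : ord -> ord -> Prop :=
| olt_succ x y : ole x y -> olt x (OS y)
| olt_lim x g n : olt x (g n) -> olt x (OL g).

Definition oeqv (a b : ord) : Prop := ole a b /\ ole b a.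

(* Well-formed notation: every fundamental sequence is strictly increasing
   (its supremum is then the limit ordinal denoted by the node). *)
Fixpoint owf (a : ord) : Prop :=
  match a with
  | O0 => True
  | OS b => owf b
  | OL f => (forall n, owf (f n)) /\ (forall n, olt (f n) (f n.+1))
  end.

Inductive occurs : ord -> ord -> Prop :=
| occ_refl a : occurs a a
| occ_S a b : occurs a b -> occurs a (OS b)
| occ_L a f n : occurs a (f n) -> occurs a (OL f).

(* Coherence: inside a, each ordinal has a single notation, i.e. the
   fundamental sequences are fixed once and for all (globally). *)
Definition coherent (a : ord) : Prop :=
  forall b c, occurs b a -> occurs c a -> oeqv b c -> b = c.

(* Finite subsets of N = {1,2,...}: strictly increasing lists of       *)
(* positive naturals.  min s = head 0 s, max s = last 0 s, #s = size s. *)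
Definition fsetN (s : seq nat) : Prop := sorted ltn s /\ all (fun k => 0 < k) s.

Definition family := seq nat -> Prop.

Definition schreier : family := fun s => fsetN s /\ size s <= head 0 s.

Definition blt (s t : seq nat) : bool := last 0 s < head 0 t.

Definition otimes (F G : family) : family := fun s =>
  exists bs : seq (seq nat),
    [/\ s = flatten bs,
        (forall b, b \in bs -> b <> [::] /\ F b),
        sorted blt bs &
        G (map (head 0) bs)].

Fixpoint Sch (a : ord) : family :=
  match a with
  | O0 => fun s => fsetN s /\ size s <= 1
  | OS b => otimes (Sch b) schreier
  | OL f => fun s => exists n, Sch (f n) s /\ all (fun k => n < k) s
  end.

(* The space X_F.  Vectors are x : nat -> R, coordinate k >= 1 being   *)
(* (x)_k (coordinate 0 is unused and forced to be 0).                   *)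
Section Space.
Variable R : realType.
Local Open Scope ring_scope.

Definition normFle (F : family) (x : nat -> R) (r : R) : Prop :=
  (forall k, (0 < k)%N -> `|x k| <= r) /\
  (forall s, F s -> \sum_(k <- s) `|x k| <= r).

(* x belongs to the completion of c00 under ||.||_F, realized as the
   closure of c00 in the sequences with the (extended) norm. *)
Definition inX (F : family) (x : nat -> R) : Prop :=
  x 0%N = 0 /\
  forall eps : R, 0 < eps ->
    exists (y : nat -> R) (N : nat),
      (forall k, (N <= k)%N -> y k = 0) /\
      normFle F (fun k => x k - y k) eps.

Definition cesaro (y : nat -> nat -> R) (N : nat) : nat -> R :=
  fun k => (N.+1%:R)^-1 * \sum_(i < N.+1) y i k.

Definition BanachSaks (F : family) (A : (nat -> R) -> Prop) : Prop :=
  forall y : nat -> nat -> R, (forall m, A (y m)) ->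
    exists phi : nat -> nat, (forall i, (phi i < phi i.+1)%N) /\
      exists z, inX F z /\
        forall eps : R, 0 < eps -> exists N0, forall N, (N0 <= N)%N ->
          normFle F (fun k => cesaro (fun i => y (phi i)) N k - z k) eps.
End Space.

(* Main.v *)
Require Import Defs.
From mathcomp Require Import all_boot all_order all_algebra.
From mathcomp Require Import reals.
From mathcomp Require Import ring lra zify.
From Stdlib Require Import Classical IndefiniteDescription.
Import Order.TTheory GRing.Theory Num.Theory.
Set Implicit Arguments. Unset Strict Implicit. Unset Printing Implicit Defensive.

Lemma olt_S_inv x y : olt x (OS y) -> ole x y.
Proof. by move=> H; inversion H. Qed.
Lemma olt_L_inv x g : olt x (OL g) -> exists n, olt x (g n).
Proof. by move=> H; inversion H; exists n. Qed.
Lemma olt_0_inv x : ~ olt x O0.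
Proof. by move=> H; inversion H. Qed.

Lemma tot_aux a : forall b, (ole a b \/ olt b a) /\ (ole b a \/ olt a b).
Proof.
elim: a => [|a IHa|f IHf] b.
- split; first by left; constructor.
  elim: b => [|b _|g IHg]; first by left; constructor.
  + by right; constructor; constructor.
  + case: (classic (exists n, olt O0 (g n))) => [[n Hn]|Hn].
    * by right; apply: olt_lim Hn.
    * left; constructor => n; case: (IHg n) => // H; exfalso; apply: Hn; by exists n.
- split.
  + case: (IHa b) => _ [H|H]; [right; by constructor | left; by constructor].
  + elim: b => [|b IHb|g IHg]; first by left; constructor.
    * case: (IHa b) => _ [H|H].
      -- by left; constructor; constructor.
      -- by right; constructor; constructor.
    * case: (classic (exists n, olt (OS a) (g n))) => [[n Hn]|Hn].
      -- by right; apply: olt_lim Hn.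
      -- left; constructor => n; case: (IHg n) => // H; exfalso; apply: Hn; by exists n.
- split.
  + case: (classic (exists n, ~ ole (f n) b)) => [[n Hn]|Hn].
    * right; case: (IHf n b) => [[H|H] _] //; exact: olt_lim H.
    * left; constructor => n; apply: NNPP => H; apply: Hn; by exists n.
  + elim: b => [|b IHb|g IHg]; first by left; constructor.
    * case: (classic (exists n, olt b (f n))) => [[n Hn]|Hn].
      -- by left; constructor; apply: olt_lim Hn.
      -- right; constructor; constructor => n.
         case: (IHf n b) => [[H|H] _] //; exfalso; apply: Hn; by exists n.
    * case: (classic (exists n, olt (OL f) (g n))) => [[n Hn]|Hn].
      -- by right; apply: olt_lim Hn.
      -- left; constructor => n; case: (IHg n) => // H; exfalso; apply: Hn; by exists n.
Qed.

Lemma occurs_trans a b c : occurs a b -> occurs b c -> occurs a c.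
Proof. move=> Hab H; induction H; eauto using occurs. Qed.

Lemma Sch_S y t : all (fun k => 0 < k)%N t -> Sch y t -> Sch (OS y) t.
Proof.
move=> Hpos Hy /=.
case: t Hpos Hy => [|k t] Hpos Hy.
- by exists [::]; split.
- exists [:: k :: t]; split => //=; first by rewrite cats0.
  + by move=> b; rewrite inE => /eqP ->.
  + move: Hpos => /= /andP[Hk _]. rewrite /schreier /fsetN /=. by rewrite Hk.
Qed.

Lemma key alpha (Hcoh : coherent alpha) d : occurs d alpha ->
  forall b, occurs b alpha -> olt b d ->
  exists N, forall t, Sch (OS b) t -> all (fun k => N < k)%N t -> Sch d t.
Proof.
elim: d => [|y IHy|g IHg] Hd b Hb Hlt.
- by case: (olt_0_inv Hlt).
- have Hy : occurs y alpha by apply: occurs_trans Hd; apply: occ_S; constructor.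
  have Hle := olt_S_inv Hlt.
  case: (tot_aux y b) => [[H|H] _].
  + have -> : b = y by apply: Hcoh.
    by exists 0%N.
  + case: (IHy Hy b Hb H) => N HN; exists N => t Ht Hall.
    apply: Sch_S; last exact: HN.
    by apply: sub_all Hall => k; apply: leq_ltn_trans.
- case: (olt_L_inv Hlt) => n Hn.
  have Hg : occurs (g n) alpha by apply: occurs_trans Hd; apply: occ_L; constructor.
  case: (IHg n Hg b Hb Hn) => N HN; exists (maxn N n) => t Ht Hall /=.
  exists n; split.
  + apply: (HN t Ht); apply: sub_all Hall => k; apply: leq_ltn_trans; exact: leq_maxl.
  + apply: sub_all Hall => k; apply: leq_ltn_trans; exact: leq_maxr.
Qed.

Lemma flat_fsetN bs : (forall b, b \in bs -> b <> [::] /\ fsetN b) -> sorted blt bs ->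
  fsetN (flatten bs).
Proof.
elim: bs => [|b bs IH] Hb Hs; first by [].
have [Hb0 [Hbs Hbp]] := Hb b (mem_head _ _).
have IH' : fsetN (flatten bs).
  apply: IH; first by move=> c Hc; apply: Hb; rewrite inE Hc orbT.
  exact: path_sorted Hs.
case: IH' => Hs2 Hp2.
split; last by rewrite /= all_cat Hbp Hp2.
clear IH; case: bs Hb Hs Hs2 Hp2 => [|c bs] Hb Hs Hs2 Hp2; first by rewrite /= cats0.
have [Hc0 _] : c <> [::] /\ fsetN c by apply: Hb; rewrite inE mem_head orbT.
move: Hs => /= /andP[Hbc _].
case: b Hb0 Hbs Hbp Hbc {Hb} => [//|h b'] _ Hbs _ Hbc.
clear Hp2; case: c Hc0 Hbc Hs2 => [//|h2 c'] _ Hbc Hs2.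
rewrite /= cat_path; move: Hbs => /= ->; rewrite /=.
move: Hs2 => /=; rewrite /blt /= in Hbc.
by rewrite Hbc.
Qed.

Lemma Sch_fsetN b t : Sch b t -> fsetN t.
Proof.
elim: b t => [|y IH|g IH] t /=.
- by case.
- case=> bs [-> Hbs Hsort _]; apply: flat_fsetN => //.
  by move=> c Hc; have [? ?] := Hbs c Hc; split => //; apply: IH.
- by case=> n [H _]; apply: (IH n).
Qed.

Lemma path_bounds t : forall h, path ltn h t -> forall k, k \in h :: t -> (h <= k <= last h t)%N.
Proof.
elim: t => [|h2 t IH] h /=.
- by move=> _ k; rewrite inE => /eqP ->; rewrite leqnn.
- move=> /andP[H1 H2] k; rewrite inE => /orP[/eqP ->|Hk].
  + have := IH h2 H2 h2 (mem_head _ _) => /andP[_ H3].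
    by rewrite leqnn /= (leq_trans (ltnW H1) H3).
  + have := IH h2 H2 k Hk => /andP[H3 H4].
    by rewrite H4 (leq_trans (ltnW H1) H3).
Qed.

Lemma incr_mono (g : nat -> nat) : (forall i, (g i < g i.+1)%N) ->
  forall a b, (a < b)%N -> (g a < g b)%N.
Proof. move=> H a b; apply: (homo_ltn ltn_trans H). Qed.

Lemma incr_ge (g : nat -> nat) : (forall i, (g i < g i.+1)%N) -> forall i, (i <= g i)%N.
Proof. move=> H; elim=> // i IH; exact: leq_ltn_trans IH (H i). Qed.

Lemma fin_max (Q : nat -> nat -> Prop) p :
  (forall n K K', (K <= K')%N -> Q n K -> Q n K') ->
  (forall n, (n <= p)%N -> exists K, Q n K) -> exists K, forall n, (n <= p)%N -> Q n K.
Proof.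
move=> Hmon; elim: p => [|p IH] H.
- case: (H 0%N isT) => K HK; exists K => n; rewrite leqn0 => /eqP ->; exact: HK.
- case: IH => [n Hn|K1 HK1]; first by apply: H; apply: leqW.
  case: (H p.+1 (leqnn _)) => K2 HK2; exists (maxn K1 K2) => n.
  rewrite leq_eqVlt => /orP[/eqP ->|Hn].
  + exact: Hmon (leq_maxr _ _) HK2.
  + exact: Hmon (leq_maxl _ _) (HK1 n Hn).
Qed.

Local Open Scope ring_scope.

Definition infP (P : nat -> Prop) := forall n, exists m, (n <= m)%N /\ P m.

Lemma infP_weak (P Q : nat -> Prop) : (forall n, P n -> Q n) -> infP P -> infP Q.
Proof. by move=> H HP n; case: (HP n) => m [? ?]; exists m; split => //; apply: H. Qed.

Lemma pig (f : nat -> nat) B : forall P, infP P -> (forall n, P n -> (f n <= B)%N) ->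
  exists b, infP (fun n => P n /\ f n = b).
Proof.
elim: B => [|B IH] P HP Hf.
- exists 0%N => n; case: (HP n) => m [Hm Pm]; exists m; split => //; split => //.
  by apply/eqP; rewrite -leqn0 Hf.
- case: (classic (infP (fun n => P n /\ f n = B.+1))) => [H|H]; first by exists B.+1.
  case: (not_all_ex_not _ _ H) => n0 Hn0.
  have HP' : infP (fun n => P n /\ (n0 <= n)%N).
    move=> n; case: (HP (maxn n n0)) => m [Hm Pm]; exists m; split; last split => //.
    + exact: leq_trans (leq_maxl _ _) Hm.
    + exact: leq_trans (leq_maxr _ _) Hm.
  case: (IH _ HP').
  + move=> n [Pn Hn]; have := Hf n Pn; rewrite leq_eqVlt ltnS => /orP[/eqP E|//].
    by exfalso; apply: Hn0; exists n; split.
  + move=> b Hb; exists b; apply: infP_weak Hb => n [[? _] ?]; by split.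
Qed.

Section RealLemmas.
Variable R : realType.

Lemma tail_lemma F (v : nat -> R) tol : inX F v -> 0 < tol ->
  exists K, forall t, F t -> all (fun k => K <= k)%N t -> \sum_(k <- t) `|v k| <= tol.
Proof.
move=> [_ Hv] Htol; case: (Hv tol Htol) => y [N [Hy [_ H2]]].
exists N => t Ht Hall.
rewrite (@eq_big_seq _ _ _ _ _ _ (fun k => `|v k - y k|)); first exact: (H2 t Ht).
move=> k Hk /=; rewrite Hy ?subr0 //; exact: (allP Hall k Hk).
Qed.

Lemma close1 (a : nat -> R) M eta P : infP P -> 0 < eta ->
  (forall n, P n -> `|a n| <= M) ->
  exists P', (forall n, P' n -> P n) /\ infP P' /\
    forall n n', P' n -> P' n' -> `|a n - a n'| <= eta.
Proof.
move=> HP Heta Ha.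
pose f n := Num.truncn ((a n + M) / eta).
have Hpos n : P n -> 0 <= (a n + M) / eta.
  move=> Pn; apply: divr_ge0; last exact: ltW.
  have := Ha n Pn; rewrite ler_norml => /andP[H1 _]; lra.
case: (@pig f (Num.truncn ((M + M) / eta)) P HP).
- move=> n Pn; apply: le_truncn; apply: ler_wpM2r.
    by rewrite invr_ge0 ltW.
  have := Ha n Pn; rewrite ler_norml => /andP[_ H1]; lra.
- move=> b Hb; exists (fun n => P n /\ f n = b); split; first by move=> n [].
  split => // n n' [Pn Hn] [Pn' Hn'].
  have := truncn_itv (Hpos n Pn); have := truncn_itv (Hpos n' Pn').
  rewrite -/(f n) -/(f n') Hn Hn' => /andP[h1 h2] /andP[h3 h4].
  have E : a n - a n' = ((a n + M) / eta - (a n' + M) / eta) * eta.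
    by field; rewrite gt_eqF.
  rewrite E normrM (gtr0_norm Heta) -[X in _ <= X]mul1r; apply: ler_wpM2r; first exact: ltW.
  rewrite ler_norml; rewrite -natr1 in h2 h4; apply/andP; split; lra.
Qed.

Lemma closeS (S : seq nat) (x : nat -> nat -> R) M eta : forall P, infP P -> 0 < eta ->
  (forall n k, P n -> k \in S -> `|x n k| <= M) ->
  exists P', (forall n, P' n -> P n) /\ infP P' /\
    forall n n' k, P' n -> P' n' -> k \in S -> `|x n k - x n' k| <= eta.
Proof.
elim: S => [|k0 S IH] P HP Heta Hx.
- by exists P; split => //; split.
- case: (@close1 (fun n => x n k0) M eta P HP Heta).
    by move=> n Pn; apply: Hx => //; exact: mem_head.
  move=> P1 [H1 [HP1 C1]].
  case: (IH P1 HP1 Heta).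
    by move=> n k Pn Hk; apply: Hx; [exact: H1 | rewrite inE Hk orbT].
  move=> P2 [H2 [HP2 C2]]; exists P2; split; first by move=> n /H2 /H1.
  split => // n n' k Pn Pn'; rewrite inE => /orP[/eqP ->|Hk].
  + by apply: C1; apply: H2.
  + exact: C2.
Qed.

End RealLemmas.

Lemma dep_choice (A : Type) (Inv : A -> Prop) (Step : A -> A -> Prop) a0 :
  Inv a0 -> (forall a, Inv a -> exists a', Inv a' /\ Step a a') ->
  exists f : nat -> A, f 0%N = a0 /\ forall m, Inv (f m) /\ Step (f m) (f m.+1).
Proof.
move=> H0 H.
have G : forall a : {a | Inv a}, {a' : {a | Inv a} | Step (proj1_sig a) (proj1_sig a')}.
  move=> [a Ha]; apply: constructive_indefinite_description.
  case: (H a Ha) => a' [Ha' S]; by exists (exist _ a' Ha').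
pose g a := proj1_sig (G a).
pose f' := fix f' m := match m with 0%N => exist _ a0 H0 | m'.+1 => g (f' m') end.
exists (fun m => proj1_sig (f' m)); split => // m; split; first exact: proj2_sig (f' m).
exact: proj2_sig (G (f' m)).
Qed.

Lemma sorted_iota_rel (r : rel nat) a b : (forall i, r i i.+1) -> sorted r (iota a b).
Proof.
move=> Hr; case: b => //= b; elim: b a => //= b IH a.
by rewrite Hr IH.
Qed.

Section R2.
Variable R : realType.

Lemma per_i (n i : nat) (Y : nat -> R) (zk c : R) : (i < n)%N -> 0 <= c ->
  (forall j, (i < j < n)%N -> `|Y j - zk| <= c) ->
  `|Y i| - (n.+1)%:R * `|zk| - \sum_(j < n) (if (j < i)%N then `|Y j| else 0) - n%:R * c
   <= `|\sum_(j < n) Y j - n%:R * zk|.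
Proof.
move=> Hi Hc HY.
have E : \sum_(j < n) Y j - n%:R * zk = \sum_(j < n) (Y j - zk).
  by rewrite sumrB sumr_const card_ord mulr_natl.
rewrite E [X in _ <= `|X|](bigD1 (Ordinal Hi)) //=.
set S' := \sum_(j < n | j != Ordinal Hi) (Y j - zk).
have H1 := lerB_normD (Y i - zk) S'.
have H2 : `|S'| <= \sum_(j < n | j != Ordinal Hi) `|Y j - zk| by apply: ler_norm_sum.
pose G : nat -> R := fun j => (if (j < i)%N then `|Y j| else 0) + `|zk| + c.
have H3 : \sum_(j < n | j != Ordinal Hi) `|Y j - zk| <= \sum_(j < n | j != Ordinal Hi) G j.
  apply: ler_sum => j Hj; rewrite /G.
  case: ifP => Hji.
  + have := ler_normB (Y j) zk; lra.
  + have : (i < j < n)%N.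
      rewrite ltn_ord andbT ltn_neqAle; move: Hj; rewrite -val_eqE /= eq_sym => ->.
      by rewrite leqNgt Hji.
    move/HY; have := normr_ge0 zk; lra.
have H4 : \sum_(j < n | j != Ordinal Hi) G j <= \sum_(j < n) G j.
  rewrite [X in _ <= X](bigD1 (Ordinal Hi)) //= -[X in X <= _]add0r lerD2r.
  rewrite /G ltnn add0r; apply: addr_ge0 => //.
have H5 : \sum_(j < n) G j = \sum_(j < n) (if (j < i)%N then `|Y j| else 0)
   + n%:R * `|zk| + n%:R * c.
  by rewrite /G !big_split /= !sumr_const !card_ord !mulr_natl.
have H6 : `|Y i| <= `|Y i - zk| + `|zk|.
  by have := ler_normD (Y i - zk) zk; rewrite subrK.
have H7 : (n.+1)%:R * `|zk| = n%:R * `|zk| + `|zk| by rewrite -natr1 mulrDl mul1r.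
rewrite H7; rewrite H5 in H4; lra.
Qed.

End R2.
Section R3.
Variable R : realType.

Lemma sum_const_seq (t : seq nat) (C : R) : \sum_(k <- t) C = (size t)%:R * C.
Proof.
elim: t => [|k t IH]; first by rewrite big_nil mul0r.
by rewrite big_cons IH /= -natr1 mulrDl mul1r addrC.
Qed.

Lemma avg_close (n m : nat) (Y : nat -> R) (a B et : R) :
  (0 < n)%N -> (m <= n)%N -> 0 <= B -> 0 <= et ->
  (forall i, (i < m)%N -> `|Y i - a| <= B) ->
  (forall i, (m <= i)%N -> (i < n)%N -> `|Y i - a| <= et) ->
  m%:R * B <= n%:R * et ->
  `|(n%:R)^-1 * \sum_(i < n) Y i - a| <= 2%:R * et.
Proof.
move=> Hn Hmn HB Het H1 H2 H3.
have Hn' : 0 < n%:R :> R by rewrite ltr0n.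
have E : (n%:R)^-1 * \sum_(i < n) Y i - a = (n%:R)^-1 * \sum_(i < n) (Y i - a).
  rewrite sumrB sumr_const card_ord -[a *+ n]mulr_natl; field; by rewrite gt_eqF.
rewrite E normrM [`|_^-1|]ger0_norm; last by rewrite invr_ge0 ltW.
rewrite ler_pdivrMl //.
apply: le_trans (ler_norm_sum _ _ _) _.
apply: (@le_trans _ _ (\sum_(i < n) ((if (i < m)%N then B else 0) + et))).
  apply: ler_sum => i _; case: ifP => Hi.
  - by have := H1 i Hi; lra.
  - by rewrite add0r; apply: H2 => //; rewrite leqNgt Hi.
rewrite big_split /= sumr_const card_ord -big_mkcond /= -(big_ord_widen _ (fun _ => B) Hmn).
rewrite sumr_const card_ord -[B *+ _]mulr_natl -[et *+ _]mulr_natl.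
have -> : n%:R * (2 * et) = 2 * (n%:R * et) by ring.
lra.
Qed.

Lemma normM_avg (n : nat) (S zk : R) : (0 < n)%N ->
  n%:R * `|(n%:R)^-1 * S - zk| = `|S - n%:R * zk|.
Proof.
move=> Hn; have Hn' : 0 < n%:R :> R by rewrite ltr0n.
rewrite -[X in X * _](ger0_norm (ltW Hn')) -normrM.
have -> // : n%:R * (n%:R^-1 * S - zk) = S - n%:R * zk.
by field; rewrite gt_eqF.
Qed.

Lemma ler_sum_in (r : seq nat) (F G : nat -> R) :
  (forall k, k \in r -> F k <= G k) -> \sum_(k <- r) F k <= \sum_(k <- r) G k.
Proof. by move=> H; rewrite big_seq [X in _ <= X]big_seq; apply: ler_sum. Qed.

Lemma arith1 (sz nn q e : R) : 0 <= sz -> 0 < q -> 0 <= nn -> nn <= 2%:R * q -> 0 <= e ->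
  sz * (nn * (4%:R * (e / (q * (sz + 1))))) <= 8%:R * e.
Proof.
move=> h1 h2 h3 h4 h5.
have hq : q * (sz + 1) != 0 by rewrite mulf_neq0 // gt_eqF //; lra.
have hq' : 0 < q * (sz + 1) by rewrite mulr_gt0 //; lra.
set w := e / (q * (sz+1)).
have hw : 0 <= w by rewrite /w divr_ge0 // ltW.
have E : e = w * (q * (sz + 1)) by rewrite /w mulfVK.
have H1 : sz * nn <= sz * (2%:R * q) by apply: ler_wpM2l.
have H2 : (sz * nn) * (4%:R * w) <= (sz * (2%:R * q)) * (4%:R * w).
  by apply: ler_wpM2r => //; apply: mulr_ge0 => //; lra.
have H3 : (sz * (2%:R * q)) * (4%:R * w) <= 8%:R * e.
  rewrite E; have : 0 <= q * w by apply: mulr_ge0 => //; lra.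
  move=> hqw; have -> : sz * (2%:R * q) * (4%:R * w) = 8%:R * (q * w) * sz by ring.
  have -> : 8%:R * (w * (q * (sz + 1))) = 8%:R * (q * w) * sz + 8%:R * (q * w) by ring.
  lra.
have -> : sz * (nn * (4%:R * w)) = (sz * nn) * (4%:R * w) by ring.
lra.
Qed.

End R3.

Unset Implicit Arguments.

Theorem proposition3p8 (R : realType) (alpha : ord)
  (Hwf : owf alpha) (Hcoh : coherent alpha)
  (x : nat -> nat -> R)
  (HX : forall n, inX (Sch alpha) (x n))
  (Hbdd : exists M : R, forall n, normFle (Sch alpha) (x n) M)
  (eps : R) (Heps : 0 < eps)
  (beta : ord) (Hbeta_occ : occurs beta alpha) (Hbeta_lt : olt beta alpha)
  (s : nat -> seq nat)
  (HsS : forall n, Sch beta (s n))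
  (Hblock : forall n, (last 0%N (s n) < head 0%N (s n.+1))%N)
  (Hsum : forall n, eps <= \sum_(k <- s n) `|x n k|) :
  ~ BanachSaks (Sch alpha) (fun w => exists n, w = x n).
Proof.
move=> HBS.
case: Hbdd => M HM.
have Hxk : forall n k, (0 < k)%N -> `|x n k| <= M.
  by move=> n k Hk; case: (HM n) => H _; exact: H.
have HM0 : 0 <= M by apply: le_trans (Hxk 0%N 1%N isT).
have Hs_fs : forall n, fsetN (s n) by move=> n; apply: Sch_fsetN (HsS n).
have Hs_ne : forall n, s n <> [::].
  move=> n E; have := Hsum n; rewrite E big_nil => H.
  by have := lt_le_trans Heps H; rewrite ltxx.
have Hs_mem : forall n k, k \in s n -> (head 0%N (s n) <= k <= last 0%N (s n))%N.
  move=> n k; have [Hso _] := Hs_fs n; case: (s n) Hso => [//|h t] /= Hso Hk.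
  exact: path_bounds Hso k Hk.
have Hs_hl : forall n, (head 0%N (s n) <= last 0%N (s n))%N.
  move=> n; have := Hs_mem n (head 0%N (s n)); case: (s n) (Hs_ne n) => [//|h t] _ /=.
  by move=> /(_ (mem_head _ _)) /andP[].
have Hs_lt : forall a b, (a < b)%N -> (last 0%N (s a) < head 0%N (s b))%N.
  move=> a; elim=> // b IH; rewrite ltnS leq_eqVlt => /orP[/eqP <-|Hab]; first exact: Hblock.
  exact: ltn_trans (IH Hab) (leq_ltn_trans (Hs_hl b) (Hblock b)).
have Hs_head : forall n, (n <= head 0%N (s n))%N.
  elim=> // n IH; exact: leq_ltn_trans IH (leq_ltn_trans (Hs_hl n) (Hblock n)).
have Hs_pos : forall n k, k \in s n -> (0 < k)%N.
  move=> n k Hk; have [_ Hp] := Hs_fs n; exact: (allP Hp k Hk).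
case: (key Hcoh (occ_refl alpha) Hbeta_occ Hbeta_lt) => Nk HNk.
have Hs_alpha : forall n, (Nk < head 0%N (s n))%N -> Sch alpha (s n).
  move=> n Hn; apply: HNk.
  - apply: Sch_S (HsS n); apply/allP => k Hk; exact: Hs_pos n k Hk.
  - apply/allP => k Hk; have /andP[H1 _] := Hs_mem n k Hk; exact: leq_trans Hn H1.
set e := eps / 64%:R.
have He : 0 < e by rewrite /e divr_gt0 // ltr0n.
pose eta (m v : nat) : R := e / ((m.+1 * (size (s v)).+1)%N)%:R.
have Heta : forall m v, 0 < eta m v by move=> m v; rewrite /eta divr_gt0 // ltr0n muln_gt0.
pose A := (nat * nat * (nat -> Prop))%type.
pose Inv (a : A) := infP a.2.
pose Step (a a' : A) := a'.1.1 = a.1.1.+1 /\ a.2 a'.1.2 /\ (Nk < head 0%N (s a'.1.2))%N /\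
   (forall n', (n' <= a.1.2)%N -> (a.1.1.+1)%:R * \sum_(k <- s a'.1.2) `|x n' k| <= e) /\
   (forall n, a'.2 n -> a.2 n /\ (a'.1.2 < n)%N) /\
   (forall u w k, a'.2 u -> a'.2 w -> k \in s a'.1.2 -> `|x u k - x w k| <= eta a.1.1 a'.1.2).
have Hstep : forall a, Inv a -> exists a', Inv a' /\ Step a a'.
  case=> [[m p] P] /= HP.
  have Hm : 0 < (m.+1)%:R :> R by rewrite ltr0n.
  case: (@fin_max (fun n' K => forall t, Sch alpha t -> all (fun k => K <= k)%N t ->
        \sum_(k <- t) `|x n' k| <= e / (m.+1)%:R) p).
  + move=> n K K' HK H t Ht Hall; apply: H Ht _; apply: sub_all Hall => k; exact: leq_trans HK.
  + move=> n _; apply: tail_lemma (HX n) _; exact: divr_gt0.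
  move=> K HK.
  case: (HP (maxn K Nk.+1)) => v [Hv Pv].
  have HvK : (K <= v)%N by exact: leq_trans (leq_maxl _ _) Hv.
  have HvN : (Nk < head 0%N (s v))%N.
    exact: leq_trans (leq_trans (leq_maxr _ _) Hv) (Hs_head v).
  have Htail : forall n', (n' <= p)%N -> (m.+1)%:R * \sum_(k <- s v) `|x n' k| <= e.
    move=> n' Hn'; rewrite -ler_pdivlMl // mulrC.
    apply: HK => //; first exact: Hs_alpha.
    apply/allP => k Hk; have /andP[H1 _] := Hs_mem v k Hk.
    exact: leq_trans HvK (leq_trans (Hs_head v) H1).
  have HP2 : infP (fun n => P n /\ (v < n)%N).
    move=> n; case: (HP (maxn n v.+1)) => w [Hw Pw]; exists w; split; last split => //.
    - exact: leq_trans (leq_maxl _ _) Hw.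
    - exact: leq_trans (leq_maxr _ _) Hw.
  case: (@closeS R (s v) x M (eta m v) _ HP2 (Heta m v)).
    move=> n k _ Hk; apply: Hxk; exact: Hs_pos v k Hk.
  move=> P' [HP'1 [HP'2 HP'3]].
  exists (m.+1, v, P').
  split; first exact: HP'2. split; first by []. split; first exact: Pv.
  split; first exact: HvN. split; first exact: Htail. split; first exact: HP'1.
  exact: HP'3.
case: (@dep_choice A Inv Step (0%N, 0%N, fun _ => True) _ Hstep) => [n|f [Hf0 Hf]].
  by exists n.
pose psi m := (f m.+1).1.2.
pose PP m := (f m).2.
have Fm : forall m, (f m).1.1 = m.
  elim=> [|m IH]; first by rewrite Hf0.
  by case: (Hf m) => _ [-> _]; rewrite IH.
have FP : forall m, PP m (psi m) by move=> m; case: (Hf m) => _ [_ [H _]].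
have Fhead : forall m, (Nk < head 0%N (s (psi m)))%N by move=> m; case: (Hf m) => _ [_ [_ [H _]]].
have Fdec : forall m n, PP m.+1 n -> PP m n /\ (psi m < n)%N.
  by move=> m n; case: (Hf m) => _ [_ [_ [_ [_ [H _]]]]]; apply: H.
have Fclose : forall m u w k, PP m.+1 u -> PP m.+1 w -> k \in s (psi m) ->
    `|x u k - x w k| <= eta m (psi m).
  move=> m; case: (Hf m) => _ [_ [_ [_ [_ [_ H]]]]]; move: H => /=; rewrite Fm; exact.
have Fpsi : forall m, (psi m < psi m.+1)%N.
  by move=> m; have := FP m.+1; move/Fdec => [_ H].
have Fpsi_mono := incr_mono Fpsi.
have Fpsi_ge := incr_ge Fpsi.
have PPdec : forall a b n, (a <= b)%N -> PP b n -> PP a n.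
  move=> a b n /subnK <-; elim: (b - a)%N => [|d IH]; rewrite ?add0n ?addSn // => H.
  by apply: IH; exact: (Fdec _ _ H).1.
have FPin : forall m m', (m < m')%N -> PP m.+1 (psi m').
  by move=> m m' H; apply: (PPdec _ _ _ H); exact: FP.
have Ftail : forall m j, (j < m)%N ->
    (m.+1)%:R * \sum_(k <- s (psi m)) `|x (psi j) k| <= e.
  move=> [|m] j // Hj.
  case: (Hf m.+1) => _ [_ [_ [_ [H _]]]]; move: H => /=; rewrite Fm; apply.
  move: Hj; rewrite ltnS leq_eqVlt => /orP[/eqP ->|/Fpsi_mono/ltnW] //.
case: (HBS (fun m => x (psi m))) => [m|phi [Hphi [z [Hz Hconv]]]].
  by exists (psi m).
have phi_mono := incr_mono Hphi.
have phi_ge := incr_ge Hphi.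
have Fz : forall m k, k \in s (psi m) ->
    `|z k - x (psi m.+1) k| <= 3%:R * eta m (psi m).
  move=> m k Hk.
  have Het := Heta m (psi m).
  have Hk0 := Hs_pos _ _ Hk.
  case: (Hconv _ Het) => N1 HN1.
  set q := (m.+1)%:R * (M + M) / eta m (psi m).
  pose N := (N1 + m + Num.truncn q)%N.
  have HNN : (N1 <= N)%N by rewrite /N; lia.
  have [HN _] := HN1 N HNN.
  have H1 := HN k Hk0.
  have H2 : `|cesaro (fun i => (fun m => x (psi m)) (phi i)) N k - x (psi m.+1) k|
      <= 2%:R * eta m (psi m).
    rewrite /cesaro /=.
    apply: (@avg_close R N.+1 m.+1 (fun i => x (psi (phi i)) k) (x (psi m.+1) k) (M + M) (eta m (psi m))).
    - by [].
    - by rewrite /N; lia.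
    - lra.
    - exact: ltW.
    - move=> i _; apply: le_trans (ler_normB _ _) _; apply: lerD; exact: Hxk.
    - move=> i Hi _.
      exact: (Fclose m _ _ k (FPin m (phi i) (leq_trans Hi (phi_ge i))) (FPin m m.+1 (ltnSn m)) Hk).
    - have Hq : 0 <= q by rewrite /q; apply: divr_ge0; [apply: mulr_ge0 => //; lra | exact: ltW].
      have := truncn_itv Hq => /andP[_ Ht].
      have : ((Num.truncn q).+1 <= N.+1)%N by rewrite /N; lia.
      rewrite -(ler_nat R) => HN'.
      have E : (m.+1)%:R * (M + M) = q * eta m (psi m) by rewrite /q mulfVK // gt_eqF.
      rewrite E; apply: ler_wpM2r; first exact: ltW.
      exact: le_trans (ltW Ht) HN'.
  have E : z k - x (psi m.+1) k =
    (z k - cesaro (fun i => (fun m => x (psi m)) (phi i)) N k) +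
    (cesaro (fun i => (fun m => x (psi m)) (phi i)) N k - x (psi m.+1) k) by ring.
  rewrite E; apply: le_trans (ler_normD _ _) _.
  rewrite distrC; move: H1 H2 => /= H1 H2; lra.
case: (tail_lemma Hz He) => Kz HKz.
case: (Hconv _ He) => Nc HNc.
pose L := (Nk + Kz + Nc)%N.
pose N := (L + L + 1)%N.
pose n := N.+1.
pose yv j := x (psi (phi j)).
pose t j := s (psi (phi j)).
pose c := cesaro (fun i => (fun m => x (psi m)) (phi i)) N.
pose W := index_iota L.+1 n.
pose T := flatten [seq t i | i <- W].
have HWmem : forall i, i \in W -> (L < i < n)%N by move=> i; rewrite mem_index_iota.
have Hpp : forall a b, (a < b)%N -> (psi (phi a) < psi (phi b))%N.
  by move=> a b Hab; apply: Fpsi_mono; apply: phi_mono.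
have Hpp_ge : forall i, (i <= psi (phi i))%N.
  by move=> i; apply: leq_trans (phi_ge i) (Fpsi_ge _).
have HT1 : Sch (OS beta) T.
  exists [seq t i | i <- W]; split => //.
  - move=> b /mapP [i _ ->]; split; [exact: Hs_ne | exact: HsS].
  - rewrite sorted_map /W /index_iota; apply: sorted_iota_rel => i /=.
    rewrite /blt /t; apply: Hs_lt; exact: Hpp.
  - split; first split.
    + rewrite -map_comp sorted_map /W /index_iota; apply: sorted_iota_rel => i /=.
      rewrite /t; apply: leq_ltn_trans (Hs_hl _) (Hs_lt _ _ (Hpp _ _ (ltnSn i))).
    + apply/allP => h /mapP [b /mapP [i _ ->] ->].
      exact: leq_ltn_trans (leq0n Nk) (Fhead (phi i)).
    + rewrite !size_map /W /index_iota.
      have -> : (n - L.+1 = L.+1)%N by rewrite /n /N; lia.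
      rewrite /= size_iota; exact: leq_trans (Hpp_ge _) (Hs_head _).
have HTelem : forall k, k \in T -> (L < k)%N.
  move=> k /flatten_mapP [i Hi Hk]; have /andP[Hi1 _] := HWmem i Hi.
  have /andP[H1 _] := Hs_mem _ _ Hk.
  exact: leq_trans Hi1 (leq_trans (Hpp_ge i) (leq_trans (Hs_head _) H1)).
have HT : Sch alpha T.
  apply: HNk HT1 _; apply/allP => k /HTelem Hk; rewrite /L in Hk; lia.
have HzT : \sum_(k <- T) `|z k| <= e.
  apply: HKz HT _; apply/allP => k /HTelem Hk; rewrite /L in Hk; lia.
have HcT : \sum_(k <- T) `|c k - z k| <= e.
  have HNcN : (Nc <= N)%N by rewrite /N /L; lia.
  have [_ H] := HNc N HNcN; exact: H T HT.
have Hper : forall i, i \in W ->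
   eps - 10%:R * e - (n.+1)%:R * \sum_(k <- t i) `|z k| <=
   n%:R * \sum_(k <- t i) `|c k - z k|.
  move=> i Hi; have /andP[Hi1 Hi2] := HWmem i Hi.
  have Hq : 0 < ((phi i).+1)%:R :> R by rewrite ltr0n.
  have Hnq : (n <= 2 * (phi i).+1)%N by have := phi_ge i; rewrite /n /N; lia.
  have Het := Heta (phi i) (psi (phi i)).
  rewrite [X in _ <= X]mulr_sumr.
  rewrite [X in _ <= X](eq_bigr (fun k => `|\sum_(j < n) yv j k - n%:R * z k|)); last first.
    by move=> k _; rewrite /c /cesaro /=; exact: normM_avg.
  apply: le_trans (ler_sum_in (F := fun k => `|yv i k| - (n.+1)%:R * `|z k|
      - \sum_(j < n) (if (j < i)%N then `|yv j k| else 0)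
      - n%:R * (4%:R * eta (phi i) (psi (phi i)))) _).
  2: { move=> k Hk; apply: (per_i (Y := fun j => yv j k)) => //.
       - apply: mulr_ge0 => //; exact: ltW.
       - move=> j /andP[Hij Hjn].
         have E : yv j k - z k = (yv j k - x (psi (phi i).+1) k) + (x (psi (phi i).+1) k - z k)
           by ring.
         rewrite E; apply: le_trans (ler_normD _ _) _.
         have C1 := Fclose (phi i) _ _ k (FPin (phi i) (phi j) (phi_mono _ _ Hij))
                     (FPin _ _ (ltnSn (phi i))) Hk.
         have C2 := Fz (phi i) k Hk; rewrite distrC in C2.
         rewrite /yv; lra. }
  rewrite !sumrB -mulr_sumr sum_const_seq.
  have B1 : eps <= \sum_(k <- t i) `|yv i k| by exact: Hsum.
  have B2 : \sum_(k <- t i) \sum_(j < n) (if (j < i)%N then `|yv j k| else 0) <= 2%:R * e.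
    rewrite exchange_big /=.
    apply: (@le_trans _ _ (\sum_(j < n) (e / ((phi i).+1)%:R))).
      apply: ler_sum => j _; case: ltnP => Hji.
      - rewrite ler_pdivlMr // mulrC; exact: (Ftail (phi i) (phi j) (phi_mono _ _ Hji)).
      - rewrite big1 //; apply: divr_ge0; exact: ltW.
    rewrite sumr_const card_ord -[_ *+ n]mulr_natl.
    have Hn2 : n%:R <= 2%:R * ((phi i).+1)%:R :> R by rewrite -natrM ler_nat.
    have -> : 2%:R * e = (2%:R * ((phi i).+1)%:R) * (e / ((phi i).+1)%:R).
      by rewrite -mulrA (mulrC ((phi i).+1)%:R) divfK // gt_eqF.
    apply: ler_wpM2r => //; apply: divr_ge0; exact: ltW.
  have B3 : (size (t i))%:R * (n%:R * (4%:R * eta (phi i) (psi (phi i)))) <= 8%:R * e.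
    have Hn2' : n%:R <= 2%:R * ((phi i).+1)%:R :> R by rewrite -natrM ler_nat.
    have A1 := @arith1 R (size (t i))%:R n%:R ((phi i).+1)%:R e (ler0n _ _) Hq (ler0n _ _) Hn2' (ltW He).
    rewrite natr1 -natrM in A1; exact A1.
  lra.
have HsumW := ler_sum_in Hper.
have HWs : (n - L.+1 = L.+1)%N by rewrite /n /N; lia.
have S1 : \sum_(i <- W) (eps - 10%:R * e - (n.+1)%:R * \sum_(k <- t i) `|z k|) =
    (L.+1)%:R * (eps - 10%:R * e) - (n.+1)%:R * \sum_(k <- T) `|z k|.
  rewrite sumrB /W sumr_const_nat HWs -[(_ - _) *+ _]mulr_natl.
  by rewrite -mulr_sumr /T big_flatten big_map.
have S2 : \sum_(i <- W) n%:R * \sum_(k <- t i) `|c k - z k| =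
    n%:R * \sum_(k <- T) `|c k - z k|.
  by rewrite -mulr_sumr /T big_flatten big_map.
rewrite S1 S2 in HsumW.
have En : n%:R = 2%:R * (L.+1)%:R :> R by rewrite -natrM /n /N; congr (_%:R); lia.
have En1 : (n.+1)%:R = n%:R + 1 :> R by rewrite natr1.
have Ee : eps = 64%:R * e by rewrite /e mulrC divfK // pnatr_eq0.
have Hl : 1 <= (L.+1)%:R :> R by rewrite ler1n.
have P1 : (n.+1)%:R * \sum_(k <- T) `|z k| <= (n.+1)%:R * e by apply: ler_wpM2l.
have P2 : n%:R * \sum_(k <- T) `|c k - z k| <= n%:R * e by apply: ler_wpM2l.
have P3 : e <= (L.+1)%:R * e by rewrite -[X in X <= _]mul1r; apply: ler_wpM2r => //; exact: ltW.
rewrite En1 En in P1; rewrite En in P2; rewrite En1 En Ee in HsumW.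
nra.
Qed.
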